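(* Fix an integer $k\geq 1$. For $m\geq 1$, let $X_0(k,m)$ be the set of permutations $p=p_1p_2\cdots p_m\in S_m$ that avoid the pattern $231$ and satisfy $p_1=m$ and $p_k=1$. Then, as formal power series, \[\sum_{m\geq 1}\vert X_0(k,m)\vert x^m=x^kC(x)^{k-1},\] where $C(x)=\dfrac{1-\sqrt{1-4x}}{2x}=\sum_{m\geq 0}C_mx^m$ is the generating function of the Catalan numbers $C_m=\frac{1}{m+1}\binom{2m}{m}$.
   Context: A permutation $\pi=\pi_1\cdots\pi_n$ contains a pattern $\tau=\tau_1\cdots\tau_k\in S_k$ if there are indices $i_1<\cdots<i_k$ with $\pi_{i_j}<\pi_{i_\ell}$ iff $\tau_j<\tau_\ell$ for all $j,\ell$; otherwise $\pi$ avoids $\tau$. *)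

(* Defs.v *)
From mathcomp Require Import all_boot all_order all_fingroup.
Set Implicit Arguments. Unset Strict Implicit. Unset Printing Implicit Defensive.

(* A permutation p of 'I_n is read as the word p(0) p(1) ... p(n-1)
   (0-based values: the paper's value v corresponds to v-1 here).
   [contains p tau] : the word of p contains the pattern tau (a seq nat,
   read as a word; only the relative order of its entries matters), i.e.
   there are positions f 0 < f 1 < ... with p (f a) < p (f b) iff tau_a < tau_b. *)
Definition contains (n : nat) (p : 'S_n) (tau : seq nat) : bool :=
  [exists f : {ffun 'I_(size tau) -> 'I_n},
     [forall a : 'I_(size tau), forall b : 'I_(size tau),
        ((a < b) ==> (f a < f b)) &&
        ((p (f a) < p (f b)) == (nth 0 tau a < nth 0 tau b))]].

Definition avoids (n : nat) (p : 'S_n) (tau : seq nat) : bool :=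
  ~~ contains p tau.

(* X_0(k,m): 231-avoiding p in S_m with p_1 = m and p_k = 1
   (1-based positions/values of the paper; position i is the ordinal i-1,
   value v is the ordinal v-1). *)
Definition X0 (k m : nat) : {set 'S_m} :=
  [set p : 'S_m | [&& avoids p [:: 2; 3; 1],
     [exists i : 'I_m, (val i == 0) && (val (p i) == m.-1)] &
     [exists i : 'I_m, (val i == k.-1) && (val (p i) == 0)]]].

Definition catalan (m : nat) : nat := 'C(m.*2, m) %/ m.+1.

Fixpoint catpow_coef (j n : nat) : nat :=
  match j with
  | 0 => (n == 0)%N
  | j'.+1 => \sum_(i < n.+1) catalan i * catpow_coef j' (n - i)
  end.

Definition rhs_coef (k m : nat) : nat :=
  if k <= m then catpow_coef k.-1 (m - k) else 0.

(* Main.v *)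
Require Import Defs.
From mathcomp Require Import all_boot all_order all_fingroup all_algebra zify ring.
Import GRing.Theory.

Definition conv (f g : nat -> nat) n := \sum_(i < n.+1) f i * g (n - i).
Fixpoint pw (c : nat -> nat) j n : nat :=
  match j with 0 => (n == 0)%N | j'.+1 => conv c (pw c j') n end.
Definition sh (g : nat -> nat) n := if n is n'.+1 then g n' else 0.

Lemma catpowE j n : catpow_coef j n = pw catalan j n.
Proof.
elim: j n => [//|j IH] n /=; rewrite /conv; apply: eq_bigr => i _; by rewrite IH.
Qed.

Section Seg.
Variable c : nat -> nat.
Hypothesis c0 : c 0 = 1.
Hypothesis cS : forall n, c n.+1 = conv c c n.

Lemma conv0 g : conv c g 0 = g 0.
Proof. by rewrite /conv big_ord_recl big_ord0 c0 addn0 mul1n. Qed.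

Lemma conv_unit n : conv c (pw c 0) n = c n.
Proof.
rewrite /conv big_ord_recr /= subnn muln1 big1 ?add0n // => i _.
have : i < n by [].
by move=> lt; rewrite (_ : (n - i == 0) = false) ?muln0 //; apply/negbTE; rewrite subn_eq0 -ltnNge.
Qed.

Lemma pw0 j : pw c j 0 = 1.
Proof. by elim: j => [//|j IH] /=; rewrite conv0. Qed.

Lemma conv_sh g m : conv c (sh g) m = sh (conv c g) m.
Proof.
case: m => [|n]; first by rewrite conv0.
rewrite /conv /= big_ord_recr /= subnn muln0 addn0.
apply: eq_bigr => i _ /=.
have lt : i < n.+1 by [].
by rewrite subSn.
Qed.

Lemma conv_add g h m : conv c (fun x => g x + h x) m = conv c g m + conv c h m.
Proof. by rewrite /conv -big_split; apply: eq_bigr => i _; rewrite mulnDr. Qed.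

Lemma eq_conv g h m : (forall x, g x = h x) -> conv c g m = conv c h m.
Proof. by move=> E; rewrite /conv; apply: eq_bigr => i _; rewrite E. Qed.

Lemma pwR j m : pw c j.+1 m = pw c j m + sh (pw c j.+2) m.
Proof.
elim: j m => [|j IH] m.
  case: m => [|n]; first by rewrite /= conv0.
  rewrite /= conv_unit cS /= add0n /conv; apply: eq_bigr => i _.
  by rewrite -/(conv c (pw c 0) (n - i)) conv_unit.
rewrite [pw c j.+2 m]/= (eq_conv _ _ _ IH) conv_add conv_sh //.
Qed.

Definition bm N n := if n is n'.+1 then 'C(N, n') else 0.
Definition e J n : int := ('C(n.*2 + J, n))%:Z - (bm (n.*2 + J) n)%:Z.

Lemma pascal N n : 'C(N.+1, n) = 'C(N, n) + bm N n.
Proof. by case: n => [|n] /=; rewrite ?bin0 ?addn0 // binS. Qed.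

Lemma e_ii n : e 0 n.+1 = e 1 n.
Proof.
rewrite /e /= !addn0 doubleS (pascal n.*2.+1 n.+1) (pascal n.*2.+1 n) /=.
have -> : n.*2.+1 = n.*2 + 1 by rewrite addn1.
have -> : 'C(n.*2 + 1, n.+1) = 'C(n.*2 + 1, n).
  rewrite -(bin_sub (n := n.*2 + 1) (m := n)); last by rewrite -addnn; lia.
  congr 'C(_, _); rewrite -addnn; lia.
rewrite !PoszD; ring.
Qed.

Lemma e_iii J n : e J.+1 n.+1 = (e J n.+1 + e J.+2 n)%R.
Proof.
rewrite /e /= doubleS.
have -> : (n.*2).+2 + J.+1 = (n.*2 + J.+2).+1 by rewrite -addnn; lia.
have -> : (n.*2).+2 + J = n.*2 + J.+2 by rewrite -addnn; lia.
rewrite (pascal _ n.+1) (pascal _ n) /= !PoszD; ring.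
Qed.

Lemma pw_e n J : Posz (pw c J.+1 n) = e J n.
Proof.
elim: n J => [|n IH] J.
  by rewrite pw0 /e /= bin0 subr0.
elim: J => [|J IHJ].
  rewrite pwR; change (Posz (0 + pw c 2 n) = e 0 n.+1).
  by rewrite add0n IH e_ii.
rewrite pwR; change (Posz (pw c J.+1 n.+1 + pw c J.+3 n) = e J.+1 n.+1).
by rewrite PoszD IHJ IH e_iii.
Qed.

Lemma c_catalan n : c n = catalan n.
Proof.
have := pw_e n 0; rewrite /= conv_unit /e addn0 => /eqP.
rewrite /catalan; case: n => [|n]; first by rewrite /= bin0 divn1.
rewrite /= => H.
have L := mul_bin_left (n.+1).*2 n.
have E : (n.+1).*2 - n = n.+2 by rewrite -addnn; lia.
rewrite E in L.
set C := 'C(_, n.+1) in H L *; set C' := 'C(_, n) in H L *.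
have le : C' <= C by nia.
move/eqP: H; rewrite subzn // => -[->].
have H2 : C = (C - C') * n.+2 by nia.
by rewrite {2}H2 mulnK.
Qed.

End Seg.

Fixpoint h2 (x : nat) (r : seq nat) : bool :=
  if r is y :: r' then ((x < y) && has (fun z => z < x) r') || h2 x r' else false.
Fixpoint has231 (s : seq nat) : bool :=
  if s is x :: r then h2 x r || has231 r else false.

Lemma h2_has x r : h2 x r -> has (fun z => z < x) r.
Proof.
elim: r => [//|y r IH] /= /orP[/andP[xy H]|/IH H]; last by rewrite H orbT.
by rewrite H orbT.
Qed.

Lemma h2_filter P x r : h2 x (filter P r) -> h2 x r.
Proof.
elim: r => [//|y r IH] /=; case: (P y) => /=; last by move/IH->; rewrite orbT.
case/orP=> [/andP[-> /hasP[z]]|/IH->]; last by rewrite orbT.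
by rewrite mem_filter => /andP[_ zr] zx; apply/orP; left; apply/hasP; exists z.
Qed.

Lemma has231_filter P s : has231 (filter P s) -> has231 s.
Proof.
elim: s => [//|x s IH] /=; case: (P x) => /=; last by move/IH->; rewrite orbT.
by case/orP=> [/h2_filter->|/IH->]; rewrite ?orbT.
Qed.

Lemma h2_lo a l : (forall y, y \in l -> y < a) -> h2 a l = false.
Proof.
elim: l => [//|y l IH] H /=.
rewrite IH; last by move=> z zl; apply: H; rewrite inE zl orbT.
have := H y (mem_head _ _); lia.
Qed.

Lemma h2_cat_hi a l h : (forall z, z \in h -> a < z) -> h2 a (l ++ h) = h2 a l.
Proof.
move=> Hh.
have hf : has (fun z => z < a) h = false.
  apply/negbTE/hasPn => z /Hh; lia.
elim: l => [|y l IH] /=.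
  by apply/negbTE; apply/negP => /h2_has; rewrite hf.
by rewrite IH has_cat hf orbF.
Qed.

Lemma has231_cat l h : (forall x y, x \in l -> y \in h -> x < y) ->
  has231 (l ++ h) = has231 l || has231 h.
Proof.
elim: l => [//|x l IH] H /=.
rewrite h2_cat_hi; last by move=> z zh; apply: H; rewrite ?mem_head.
rewrite IH ?orbA // => u v ul vh; apply: H => //; by rewrite inE ul orbT.
Qed.

Lemma decomp a r : ~~ has231 (a :: r) -> a \notin r ->
  r = filter (fun x => x < a) r ++ filter (fun x => a < x) r.
Proof.
elim: r => [//|y r IH] /=; rewrite negb_or => /andP[H1 H2].
rewrite inE negb_or => /andP[ay ar].
move: H1 H2; rewrite negb_or => /andP[H1 H3] /= /norP[H4 H5].
have IH' : r = [seq x <- r | x < a] ++ [seq x <- r | a < x].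
  by apply: IH ar; rewrite /= negb_or H3 H5.
case: (ltngtP y a) => [ya|ay'|ya]; last by rewrite ya eqxx in ay.
  by rewrite /= {1}IH'.
have hf : has (fun z => z < a) r = false by move: H1; rewrite ay' /= => /negbTE.
have : filter (fun x => x < a) r = [::] by apply/eqP; rewrite -[_ == _]negbK -has_filter hf.
by move=> E; rewrite /= {1}IH' E.
Qed.

Lemma h2P x r : reflect (exists j l, [/\ j < l, l < size r & nth 0 r l < x < nth 0 r j]) (h2 x r).
Proof.
apply: (iffP idP).
  elim: r => [//|y r IH] /= /orP[/andP[xy /hasP[z zr zx]]|/IH[j [l [jl ls H]]]].
    exists 0, (index z r).+1; split => //=; first by rewrite ltnS index_mem.
    by rewrite nth_index // zx xy.
  by exists j.+1, l.+1.
elim: r => [|y r IH] [j [l [jl ls H]]] /=; first by [].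
case: j jl H => [|j] jl H.
  case: l jl ls H => [//|l] _ ls /= /andP[lx xy].
  apply/orP; left; rewrite xy /=; apply/hasP; exists (nth 0 r l) => //.
  by rewrite mem_nth.
case: l jl ls H => [//|l] jl ls H.
by apply/orP; right; apply: IH; exists j, l.
Qed.

Lemma has231P s : reflect (exists i j l, [/\ i < j, j < l, l < size s &
   nth 0 s l < nth 0 s i < nth 0 s j]) (has231 s).
Proof.
apply: (iffP idP).
  elim: s => [//|x r IH] /= /orP[/h2P[j [l [jl ls H]]]|/IH[i [j [l [ij jl ls H]]]]].
    by exists 0, j.+1, l.+1.
  by exists i.+1, j.+1, l.+1.
elim: s => [|x r IH] [i [j [l [ij jl ls H]]]] /=; first by [].
case: i ij H => [|i] ij H.
  case: j ij jl H => [//|j] _ jl; case: l jl ls => [//|l] jl ls H.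
  by apply/orP; left; apply/h2P; exists j, l.
case: j ij jl H => [//|j] ij jl; case: l jl ls => [//|l] jl ls H.
by apply/orP; right; apply: IH; exists i, j, l.
Qed.

Fixpoint genf (f lo n : nat) : seq (seq nat) :=
  if f is f'.+1 then
    (if n is 0 then [:: [::]] else
     flatten [seq [seq (lo + i) :: l ++ h | l <- genf f' lo i,
                     h <- genf f' (lo + i).+1 (n - i.+1)] | i <- iota 0 n])
  else [:: [::]].

Lemma genf0 f lo : genf f lo 0 = [:: [::]].
Proof. by case: f. Qed.

Lemma genfS f lo n : genf f.+1 lo n.+1 =
  flatten [seq [seq (lo + i) :: l ++ h | l <- genf f lo i,
                     h <- genf f (lo + i).+1 (n.+1 - i.+1)] | i <- iota 0 n.+1].
Proof. by []. Qed.

Lemma iota_split lo n i : i < n ->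
  iota lo n = iota lo i ++ (lo + i) :: iota (lo + i).+1 (n - i.+1).
Proof.
move=> lt; rewrite -{1}(subnKC (ltnW lt)) iotaD.
by have -> : n - i = (n - i.+1).+1 by lia.
Qed.

Lemma filter_true (P : pred nat) s : (forall x, x \in s -> P x) -> filter P s = s.
Proof. by move=> H; apply/all_filterP/allP. Qed.

Lemma filter_false (P : pred nat) s : (forall x, x \in s -> ~~ P x) -> filter P s = [::].
Proof.
elim: s => [//|x s IH] H /=; rewrite (negbTE (H x (mem_head _ _))) IH //.
by move=> y ys; apply: H; rewrite inE ys orbT.
Qed.

Lemma mem_genf f lo n : n <= f -> forall t,
  (t \in genf f lo n) = perm_eq t (iota lo n) && ~~ has231 t.
Proof.
elim: f lo n => [|f IH] lo [|n] nf t //; rewrite ?genf0.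
- rewrite inE; apply/eqP/andP => [->|[/perm_nilP -> _]] //.
- rewrite inE; apply/eqP/andP => [->|[/perm_nilP -> _]] //.
rewrite genfS; apply/idP/idP.
  case/flattenP => blk /mapP[i iin ->] /allpairsP[[l h] [/= lin hin ->]].
  have ilt : i < n.+1 by rewrite mem_iota in iin.
  move: lin; rewrite IH; last by lia.
  case/andP => pl al.
  move: hin; rewrite IH; last by lia.
  case/andP => ph ah.
  have lsm : forall y, y \in l -> y < lo + i.
    by move=> y; rewrite (perm_mem pl) mem_iota; lia.
  have hbg : forall y, y \in h -> lo + i < y.
    by move=> y; rewrite (perm_mem ph) mem_iota; lia.
  apply/andP; split.
    change (perm_eq (lo + i :: l ++ h) (iota lo n.+1)).
    rewrite (@iota_split lo _ _ ilt) -cat1s perm_sym.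
    rewrite (perm_catCA (iota lo i) [:: lo + i]) /= perm_cons perm_sym.
    by rewrite perm_cat.
  rewrite /= h2_cat_hi // h2_lo // has231_cat ?negb_or ?al ?ah //.
  move=> x y xl yh; have := lsm x xl; have := hbg y yh; lia.
case/andP => pt av.
case: t pt av => [|a r] pt av; first by have := perm_size pt; rewrite size_iota.
have ain : a \in iota lo n.+1 by rewrite -(perm_mem pt) mem_head.
rewrite mem_iota in ain.
set i := a - lo.
have ea : a = lo + i by rewrite /i; lia.
have ilt : i < n.+1 by rewrite /i; lia.
have ut : uniq (a :: r) by rewrite (perm_uniq pt) iota_uniq.
have anr : a \notin r by case/andP: ut.
have dec := @decomp a r av anr.
apply/flattenP; exists [seq (lo + i) :: l ++ h | l <- genf f lo i,
                     h <- genf f (lo + i).+1 (n.+1 - i.+1)].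
  by apply/mapP; exists i => //; rewrite mem_iota.
apply/allpairsP; exists ([seq x <- r | x < a], [seq x <- r | a < x]); split => /=.
- rewrite IH; last by lia.
  apply/andP; split; last first.
    apply/negP => /has231_filter H; move: av; rewrite /= H orbT //.
  have := perm_filter (fun x => x < a) pt.
  rewrite (@iota_split lo _ _ ilt) [filter _ (a :: r)]/= ltnn filter_cat [filter _ (_ :: iota _ _)]/= -ea ltnn (filter_true _ (iota lo i)); last first.
    by move=> x; rewrite mem_iota; lia.
  rewrite (filter_false _ (iota _ _)) ?cats0 //.
  by move=> x; rewrite mem_iota; lia.
- rewrite IH; last by lia.
  apply/andP; split; last first.
    apply/negP => /has231_filter H; move: av; rewrite /= H orbT //.
  have := perm_filter (fun x => a < x) pt.
  rewrite (@iota_split lo _ _ ilt) [filter _ (a :: r)]/= ltnn filter_cat [filter _ (_ :: iota _ _)]/= -ea ltnn (filter_false _ (iota lo i)); last first.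
    by move=> x; rewrite mem_iota; lia.
  rewrite (filter_true _ (iota _ _)) //.
  by move=> x; rewrite mem_iota; lia.
by rewrite -ea -dec.
Qed.

Lemma uniq_flatten_map (s : seq nat) (B : nat -> seq (seq nat)) (key : seq nat -> nat) :
  uniq s -> (forall i, i \in s -> uniq (B i)) ->
  (forall i t, i \in s -> t \in B i -> key t = i) -> uniq (flatten (map B s)).
Proof.
elim: s => [//|x s IH] /= /andP[xs us] UB K.
rewrite cat_uniq UB ?mem_head // IH //; last first.
- by move=> i t iS; apply: K; rewrite inE iS orbT.
- by move=> i iS; apply: UB; rewrite inE iS orbT.
rewrite andbT; apply/hasPn => t /flattenP[b /mapP[j js ->] tb].
apply/negP => tx.
have := K _ _ (mem_head _ _) tx; rewrite (K j t) ?inE ?js ?orbT // => ejx.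
by move: xs; rewrite -ejx js.
Qed.

Lemma uniq_genf f lo n : n <= f -> uniq (genf f lo n).
Proof.
elim: f lo n => [|f IH] lo [|n] nf //; rewrite ?genf0 // genfS.
apply: (@uniq_flatten_map _ _ (fun t => head 0 t - lo)); first exact: iota_uniq.
  move=> i iin; have ilt : i < n.+1 by rewrite mem_iota in iin.
  apply: allpairs_uniq; rewrite ?IH //; try lia.
  move=> [l h] [l' h'] /allpairsP[[l1 h1] [/= l1in h1in [-> ->]]].
  move=> /allpairsP[[l2 h2] [/= l2in h2in [-> ->]]] /= [].
  move: l1in l2in; rewrite !mem_genf; try lia.
  case/andP => /perm_size s1 _ /andP[/perm_size s2 _].
  move/eqP; rewrite eqseq_cat; last by rewrite s1 s2.
  by case/andP => /eqP -> /eqP ->.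
move=> i t _ /allpairsP[[l h] [_ _ ->]] /=; lia.
Qed.

Definition Sz n := size (genf n 0 n).

Lemma size_genfS f lo n : size (genf f.+1 lo n.+1) =
  sumn [seq size (genf f lo i) * size (genf f (lo + i).+1 (n.+1 - i.+1)) | i <- iota 0 n.+1].
Proof.
rewrite genfS size_flatten /shape -map_comp; congr sumn; apply: eq_map => i /=.
by rewrite size_allpairs.
Qed.

Lemma size_genf n : forall f lo, n <= f -> size (genf f lo n) = Sz n.
Proof.
elim/ltn_ind: n => [[|n]] IH [|f] lo nf //; rewrite /Sz ?genf0 //.
rewrite !size_genfS; congr sumn; apply/eq_in_map => i.
rewrite mem_iota => /andP[_ ilt].
rewrite IH; try lia. rewrite [in RHS]IH; try lia.
rewrite IH; try lia. by rewrite [in RHS]IH; try lia.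
Qed.

Lemma Sz0 : Sz 0 = 1. Proof. by []. Qed.

Lemma SzS n : Sz n.+1 = conv Sz Sz n.
Proof.
change (size (genf n.+1 0 n.+1) = conv Sz Sz n).
rewrite size_genfS sumnE big_map /conv -[iota 0 n.+1]/(index_iota 0 n.+1) big_mkord.
apply: eq_bigr => i _; rewrite !size_genf //; try lia.
by have := ltn_ord i.
Qed.

Lemma Sz_cat n : Sz n = catalan n.
Proof. apply: (@c_catalan Sz); [exact: Sz0 | exact: SzS]. Qed.

Lemma size_genf_cat f lo n : n <= f -> size (genf f lo n) = catalan n.
Proof. by move=> nf; rewrite size_genf // Sz_cat. Qed.

Lemma count_allpairs (F : seq nat -> seq nat -> seq nat) (P : pred (seq nat)) (P' : pred (seq nat)) L H :
  (forall l h, l \in L -> h \in H -> P (F l h) = P' l) ->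
  count P [seq F l h | l <- L, h <- H] = count P' L * size H.
Proof.
elim: L => [//|l L IH] K.
rewrite allpairs_cons count_cat count_map IH; last first.
  by move=> l' h l'L hH; apply: K; rewrite ?inE ?l'L ?orbT.
rewrite mulnDl; congr (_ + _).
rewrite (eq_in_count (a2 := fun _ => P' l)); last first.
  by move=> h hH /=; apply: K; rewrite ?mem_head.
by case: (P' l) => /=; rewrite ?count_predT ?count_pred0 ?mul1n ?mul0n.
Qed.

Lemma sum_shift (g : nat -> nat) j n :
  \sum_(i < n.+1) (if j < i then g (i - j.+1) else 0) * catalan (n - i) =
  if j < n then conv catalan g (n - j.+1) else 0.
Proof.
case: ltnP => jn; last first.
  by rewrite big1 // => i _; have ilt := ltn_ord i; have -> : (j < i) = false by lia.
rewrite -(big_mkord xpredT (fun i => (if j < i then g (i - j.+1) else 0) * catalan (n - i))).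
rewrite (big_cat_nat (n := j.+1)) //=; last by lia.
rewrite big_nat_cond big1 ?add0n; last first.
  by move=> i /andP[/andP[_ ij] _]; have -> : (j < i) = false by lia.
rewrite -{1}(add0n j.+1) big_addn.
have -> : n.+1 - j.+1 = (n - j.+1).+1 by lia.
rewrite big_mkord /conv (reindex_inj rev_ord_inj) /=.
apply: eq_bigr => i _.
have ilt := ltn_ord i.
have -> : (j < (n - j.+1).+1 - i.+1 + j.+1) = true by lia.
rewrite mulnC; congr (_ * _); congr (_ _); lia.
Qed.

Lemma count_const (T : Type) (b : bool) (s : seq T) : count (fun _ => b) s = b * size s.
Proof. by case: b; rewrite ?count_predT ?count_pred0 ?mul1n. Qed.

Lemma count_genf j : forall n f lo, n <= f ->
  count (fun t => nth lo.+1 t j == lo) (genf f lo n) =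
  if j < n then pw catalan j.+1 (n - j.+1) else 0.
Proof.
elim: j => [|j IHj] [|n] [|f] lo nf //; try by rewrite genf0 /= eqn_leq ltnn.
- rewrite genfS count_flatten -map_comp sumnE big_map -[iota 0 n.+1]/(index_iota 0 n.+1) big_mkord.
  rewrite (eq_bigr (fun i : 'I_n.+1 => ((i : nat) == 0) * size (genf f lo i) * size (genf f (lo + i).+1 (n.+1 - i.+1)))); last first.
    move=> i _ /=; rewrite (@count_allpairs _ _ (fun _ => (i : nat) == 0)) ?count_const //.
    by move=> l h _ _ /=; lia.
  rewrite big_ord_recl big1 ?addn0; last by move=> i _.
  rewrite /= genf0 /= mul1n size_genf_cat; last by lia.
  by rewrite mul1n -(conv_unit catalan (n.+1 - 1)).
- rewrite genfS count_flatten -map_comp sumnE big_map -[iota 0 n.+1]/(index_iota 0 n.+1) big_mkord.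
  rewrite (eq_bigr (fun i : 'I_n.+1 => (if j < i then pw catalan j.+1 (i - j.+1) else 0) * catalan (n - i))); last first.
    move=> i _ /=; have ilt := ltn_ord i.
    rewrite (@count_allpairs _ _ (fun l => nth lo.+1 l j == lo)).
      by rewrite IHj; try lia; rewrite size_genf_cat ?subSS //; lia.
    move=> l h lin hin /=.
    rewrite nth_cat; case: ltnP => // jl.
    have Hf : (lo.+1 == lo) = false by lia.
    rewrite (nth_default _ jl) Hf.
    case: (ltnP (j - size l) (size h)) => jh; last by rewrite (nth_default _ jh) Hf.
    have := mem_nth lo.+1 jh.
    move: hin; rewrite mem_genf; last by lia.
    case/andP => /perm_mem -> _; rewrite mem_iota => H; apply/negbTE/eqP => E; rewrite E in H; lia.
  exact: sum_shift.
Qed.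

Section Perm.
Variable m : nat.

Definition phi (p : 'S_m) : seq nat := [seq val (p i) | i <- enum 'I_m].

Lemma size_phi p : size (phi p) = m.
Proof. by rewrite size_map size_enum_ord. Qed.

Lemma nth_phi p (i : 'I_m) d : nth d (phi p) i = p i.
Proof. by rewrite (nth_map i) ?size_enum_ord // nth_ord_enum. Qed.

Lemma phi_inj : injective phi.
Proof.
move=> p q E; apply/permP => i; apply/val_inj; change (nat_of_ord (p i) = nat_of_ord (q i)).
by rewrite -(nth_phi p i 0) -(nth_phi q i 0) E.
Qed.

Lemma phi_perm p : perm_eq (phi p) (iota 0 m).
Proof.
apply: uniq_perm; rewrite ?iota_uniq //.
  rewrite map_inj_uniq ?enum_uniq // => i j /val_inj; exact: perm_inj.
move=> x; rewrite mem_iota add0n /=; apply/mapP/idP.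
  by case=> i _ ->; apply: ltn_ord.
move=> xm; exists (p^-1 (Ordinal xm))%g; first by rewrite mem_enum.
by rewrite permKV.
Qed.

Lemma phi_surj t : perm_eq t (iota 0 m) -> exists p, phi p = t.
Proof.
move=> pt.
have st : size t = m by rewrite (perm_size pt) size_iota.
have ut : uniq t by rewrite (perm_uniq pt) iota_uniq.
have lt : forall i : 'I_m, nth 0 t i < m.
  move=> i; have : nth 0 t i \in t by rewrite mem_nth // st.
  by rewrite (perm_mem pt) mem_iota.
pose f := fun i : 'I_m => (insubd i (nth 0 t i) : 'I_m).
have finj : injective f.
  move=> i j /(congr1 val); rewrite /f !val_insubd !lt => /eqP.
  rewrite nth_uniq ?st // => /eqP; exact: val_inj.
exists (perm finj); apply: (@eq_from_nth _ 0); first by rewrite size_phi st.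
move=> i; rewrite size_phi => im.
by rewrite (nth_phi _ (Ordinal im)) permE /f val_insubd (lt (Ordinal im)).
Qed.

Lemma contains231 (p : 'S_m) : contains p [:: 2; 3; 1] = has231 (phi p).
Proof.
apply/idP/idP.
  case/existsP => f /forallP H.
  pose a0 : 'I_(size [:: 2; 3; 1]) := @Ordinal 3 0 isT.
  pose a1 : 'I_(size [:: 2; 3; 1]) := @Ordinal 3 1 isT.
  pose a2 : 'I_(size [:: 2; 3; 1]) := @Ordinal 3 2 isT.
  move: (H a0) => /forallP /(_ a1) /andP [/implyP /(_ isT) f01 /eqP e01].
  move: (H a1) => /forallP /(_ a2) /andP [/implyP /(_ isT) f12 _].
  move: (H a2) => /forallP /(_ a0) /andP [_ /eqP e20].
  apply/has231P; exists (f a0), (f a1), (f a2).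
  by rewrite size_phi !nth_phi e01 e20 ltn_ord.
case/has231P => [i [j [l [ij jl lm H]]]].
rewrite size_phi in lm.
have im : i < m by lia.
have jm : j < m by lia.
pose I := Ordinal im; pose J := Ordinal jm; pose L := Ordinal lm.
rewrite -[i]/(val I) -[j]/(val J) -[l]/(val L) !nth_phi in H.
case/andP: H => pLI pIJ.
apply/existsP; exists [ffun a : 'I_(size [:: 2; 3; 1]) =>
  if val a == 0 then I else if val a == 1 then J else L].
apply/forallP => a; apply/forallP => b; rewrite !ffunE.
case: a => [[|[|[|a]]] ha] //; case: b => [[|[|[|b]]] hb] //=;
  by try (apply/andP; split); try apply/eqP; lia.
Qed.

Lemma exE (p : 'S_m) j v d :
  [exists i : 'I_m, (val i == j) && (val (p i) == v)] = (j < m) && (nth d (phi p) j == v).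
Proof.
apply/existsP/andP => [[i /andP[/eqP <- /eqP <-]]|[jm /eqP E]].
  by rewrite ltn_ord nth_phi.
by exists (Ordinal jm); rewrite /= eqxx -E (nth_phi p (Ordinal jm)) eqxx.
Qed.

End Perm.
Arguments phi {m} p.
Arguments exE {m} p j v d.
Arguments phi_surj {m} [t].
Arguments contains231 {m} p.
Arguments phi_perm {m} p.
Arguments phi_inj {m}.

Lemma card_X0 k m : 0 < m ->
  #|X0 k m| = count (fun t => (nth 0 t 0 == m.-1) && (nth 1 t k.-1 == 0)) (genf m 0 m).
Proof.
move=> m0.
pose P t := [&& ~~ has231 t, nth 0 t 0 == m.-1 & nth 1 t k.-1 == 0].
have PX : forall p, (p \in X0 k m) = P (phi p).
  move=> p; rewrite inE /avoids contains231 (exE p 0 (m.-1) 0) (exE p k.-1 0 1) m0 /P /=.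
  case: (ltnP k.-1 m) => //= km.
  by rewrite (nth_default _ (n := k.-1)) ?size_phi // !andbF.
rewrite cardE -(size_map (@phi m) (enum (X0 k m))).
have -> : count (fun t => (nth 0 t 0 == m.-1) && (nth 1 t k.-1 == 0)) (genf m 0 m)
    = count P (genf m 0 m).
  apply: eq_in_count => t; rewrite mem_genf // => /andP[_ av].
  by rewrite /P av.
rewrite -size_filter; apply: perm_size; apply: uniq_perm.
- by rewrite map_inj_uniq ?enum_uniq //; exact: phi_inj.
- by rewrite filter_uniq // uniq_genf.
move=> t; rewrite mem_filter mem_genf //; apply/mapP/idP.
  case=> p; rewrite mem_enum PX => Pp ->.
  by rewrite Pp phi_perm; case/and3P: Pp.
case/andP => Pt /andP[pt _].
have [p ept] := phi_surj pt.
by exists p; [rewrite mem_enum PX ept | rewrite ept].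
Qed.

Theorem lemma1 (k : nat) : 1 <= k ->
  forall m : nat, 1 <= m -> #|X0 k m| = rhs_coef k m.
Proof.
move=> k1 [//|m] _.
rewrite card_X0 // genfS count_flatten -map_comp sumnE big_map
  -[iota 0 m.+1]/(index_iota 0 m.+1) big_mkord.
rewrite (eq_bigr (fun i : 'I_m.+1 =>
   count (fun l => ((i : nat) == m) && (nth 1 ((i : nat) :: l) k.-1 == 0)) (genf m 0 i)
   * size (genf m (0 + i).+1 (m.+1 - i.+1)))); last first.
  move=> i _ /=; apply: count_allpairs => l h _ hin /=.
  rewrite add0n; case: eqP => // ei; rewrite ei in hin *.
  move: hin; rewrite subnn genf0 inE => /eqP ->; by rewrite cats0.
rewrite big_ord_recr /= big1 ?add0n; last first.
  move=> i _; rewrite (@eq_count _ _ pred0) ?count_pred0 // => l /=.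
  by rewrite (ltn_eqF (ltn_ord i)).
rewrite subnn genf0 muln1 eqxx /rhs_coef.
case: k k1 => [//|[|k]] _ /=.
  rewrite count_const size_genf_cat // subn1 /=.
  by case: m => [|m] //=; rewrite muln0.
rewrite (count_genf k) // -/(catpow_coef k.+1 (m.+1 - k.+2)) catpowE.
by [].
Qed.
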